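(* Let $p$ be a prime, let $\alpha,n\in\mathbb{N}$ with $\alpha\geqslant2$, and let $r,s,t\in\mathbb{Z}$ with $0\leqslant s,t<p^{\alpha-2}$. Then $$p^{-\left\lfloor\frac{p^{\alpha-2}n+s-p^{\alpha-1}}{\varphi(p^{\alpha})}\right\rfloor}\sum_{k\equiv p^{\alpha-2}r+t\ (\mathrm{mod}\ p^{\alpha})}\binom{p^{\alpha-2}n+s}k(-1)^k\equiv(-1)^t\binom st\Bigg(p^{-\left\lfloor\frac{n-p}{\varphi(p^2)}\right\rfloor}\sum_{k\equiv r\ (\mathrm{mod}\ p^2)}\binom nk(-1)^k\Bigg)\pmod p.$$
   Context: $\varphi$ is Euler's totient function. Sums run over all integers $k$ in the indicated residue class with $\binom Nk=0$ unless $0\le k\le N$. For rationals $u,v$, $u\equiv v\pmod p$ means $\operatorname{ord}_p(u-v)\geq 1$. *)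

(* Defs.v *)
From mathcomp Require Import all_boot all_order all_algebra.
Set Implicit Arguments. Unset Strict Implicit. Unset Printing Implicit Defensive.
Import Order.TTheory GRing.Theory Num.Theory.
Local Open Scope ring_scope.

Definition ordp (p : nat) (q : rat) : int :=
  (logn p `|numq q|%N)%:Z - (logn p `|denq q|%N)%:Z.

(* u == v (mod p) for rationals: ord_p(u - v) >= 1 (ord_p 0 = +oo). *)
Definition rat_congr (p : nat) (u v : rat) : Prop :=
  u - v = 0 \/ 1 <= ordp p (u - v).

(* \sum_{k == c (mod m)} binom(N,k) (-1)^k, k over all integers; only
   0 <= k <= N contribute. *)
Definition altsum (N : nat) (c : int) (m : nat) : rat :=
  \sum_(0 <= k < N.+1 | (k%:Z == c %[mod m%:Z])%Z)
     ('C(N, k))%:R * (-1) ^+ k.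

(* Main.v *)
Require Import Defs.
From mathcomp Require Import all_boot all_order all_algebra.
From mathcomp Require Import ring lra zify.
Set Implicit Arguments. Unset Strict Implicit. Unset Printing Implicit Defensive.
Import Order.TTheory GRing.Theory Num.Theory.
Local Open Scope ring_scope.

Lemma L1 (R : comPzRingType) (p : nat) (a b : R) n :
  exists h, (a + p%:R * b) ^+ n = a ^+ n + p%:R * h.
Proof.
elim: n => [|n [h IH]]; first by exists 0; rewrite !expr0 mulr0 addr0.
exists (h * a + a ^+ n * b + p%:R * h * b).
rewrite exprSr IH exprSr; ring.
Qed.

Lemma L2 (R : comPzRingType) (p : nat) (y : R) : prime p ->
  exists h, (1 - y) ^+ p = 1 - y ^+ p + p%:R * h.
Proof.
move=> pp; have p1 : (1 < p)%N by apply: prime_gt1.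
case: p pp p1 => // p' pp p1.
rewrite exprBn big_ord_recr big_ord_recl /= !subnn !expr0 !mul1r expr1n !mulr1 bin0 binn ?subn0.
have hmid : exists h, \sum_(i < p')
    ((-1) ^+ (bump 0 i) * 1 ^+ (p'.+1 - bump 0 i) * y ^+ bump 0 i) *+ 'C(p'.+1, bump 0 i)
    = p'.+1%:R * h.
  exists (\sum_(i < p') ((-1) ^+ (bump 0 i) * y ^+ bump 0 i) *+ ('C(p'.+1, bump 0 i) %/ p'.+1)).
  rewrite mulr_sumr; apply: eq_bigr => i _.
  have H : (p'.+1 %| 'C(p'.+1, bump 0 i))%N.
    apply: prime_dvd_bin => //; rewrite /bump /= add1n ltnS.
    have := ltn_ord i; lia.
  by rewrite expr1n mulr1 -{1}(divnK H) mulrnA mulr_natl.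
case: hmid => h ->.
have [e2|op] := even_prime pp.
  case: e2 => e2; subst p'.
  exists (h + y ^+ 2); rewrite /= ?expr1n; ring.
exists h; rewrite -signr_odd op expr1; ring.
Qed.

Lemma Frob (p : nat) k : prime p ->
  exists g : {poly int}, (1 - 'X) ^+ (p ^ k) = 1 - 'X ^+ (p ^ k) + p%:R * g.
Proof.
move=> pp; elim: k => [|k [g IH]].
  by exists 0; rewrite expn0 !expr1 mulr0 addr0.
rewrite expnSr !exprM IH.
have [h1 ->] := L1 p (1 - 'X ^+ (p ^ k) : {poly int}) g p.
have [h2 ->] := L2 ('X ^+ (p ^ k) : {poly int}) pp.
by exists (h2 + h1); rewrite mulrDr addrA.
Qed.

Lemma L2X (p : nat) : prime p ->
  exists k : {poly int}, (1 - 'X) ^+ p = 1 - 'X ^+ p + p%:R * ((1 - 'X) * k).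
Proof.
move=> pp; have [h Hh] := L2 ('X : {poly int}) pp.
have r1 : root h 1.
  have := congr1 (horner^~ 1) Hh.
  rewrite -polyC_natr !hornerE expr1n !subrr expr0n gtn_eqF ?prime_gt0 //= mulr0n add0r.
  by move=> /esym/eqP; rewrite mulf_eq0 pnatr_eq0 gtn_eqF ?prime_gt0.
case/factor_theorem: r1 => q Hq.
exists (- q); rewrite Hh Hq; congr (_ + _); rewrite polyC1; ring.
Qed.
Definition S (f : {poly int}) (c : int) (m : nat) : int :=
  \sum_(0 <= k < size f | (k%:Z == c %[mod m%:Z])%Z) f`_k.

Lemma S_big B (f : {poly int}) (c : int) (m : nat) : (size f <= B)%N ->
  S f c m = \sum_(0 <= k < B | (k%:Z == c %[mod m%:Z])%Z) f`_k.
Proof.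
move=> H; rewrite /S (@big_cat_nat _ _ _ (size f) 0 B) //=.
rewrite [X in _ + X]big1_seq ?addr0 // => k /andP[_].
by rewrite mem_index_iota => /andP[hk _]; apply: nth_default.
Qed.

Lemma S0 (c : int) (m : nat) : S 0 c m = 0.
Proof. by rewrite /S size_poly0 big_geq. Qed.

Lemma SD (f g : {poly int}) (c : int) (m : nat) : S (f + g) c m = S f c m + S g c m.
Proof.
set B := maxn (size f) (size g).
rewrite !(@S_big B) ?size_polyD ?leq_maxl ?leq_maxr // -big_split /=.
by apply: eq_bigr => k _; rewrite coefD.
Qed.

Lemma Ssum (I : Type) (r : seq I) (P : pred I) (F : I -> {poly int}) (c : int) (m : nat) :
  S (\sum_(i <- r | P i) F i) c m = \sum_(i <- r | P i) S (F i) c m.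
Proof.
by apply: (big_morph (fun f => S f c m)) => [f g|]; [apply: SD | apply: S0].
Qed.

Lemma SC (a : int) (f : {poly int}) (c : int) (m : nat) : S (a%:P * f) c m = a * S f c m.
Proof.
rewrite (@S_big (size f)); last by rewrite mul_polyC size_scale_leq.
by rewrite /S mulr_sumr; apply: eq_bigr => k _; rewrite coefCM.
Qed.

Lemma Scong (f : {poly int}) (c c' : int) (m : nat) : (c %% m%:Z)%Z = (c' %% m%:Z)%Z -> S f c m = S f c' m.
Proof. by move=> H; rewrite /S; apply: eq_bigl => k; rewrite H. Qed.

Lemma Sshift (f : {poly int}) (i : nat) (c : int) (m : nat) : S (f * 'X^i) c m = S f (c - i%:Z) m.
Proof.
rewrite (@S_big (i + size f)); last first.
  apply/leq_sizeP => j hj; rewrite coefMXn; case: ifP => // hji.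
  by apply: nth_default; move/negbT: hji; rewrite -leqNgt => hij; rewrite leq_subRL // addnC.
rewrite (@big_cat_nat _ _ _ i 0 (i + size f)) ?leq_addr //=.
rewrite big1_seq ?add0r; last first.
  by move=> k /andP[_]; rewrite mem_index_iota coefMXn => /andP[_ ->].
rewrite -{1}(add0n i) big_addn addKn /S; apply: eq_big => k.
  by rewrite -[RHS](eqz_modDr i%:Z) subrK PoszD.
by move=> _; rewrite coefMXn ltnNge leq_addl /= addnK.
Qed.

Lemma polyB (h : {poly int}) B : (size h <= B)%N -> h = \sum_(i < B) (h`_i)%:P * 'X^(nat_of_ord i).
Proof.
move=> H; under eq_bigr do rewrite mul_polyC; rewrite -poly_def.
apply/polyP => k; rewrite coef_poly; case: ltnP => // hk.
by apply: nth_default; apply: leq_trans hk.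
Qed.

Lemma Smul B (h f : {poly int}) (c : int) (m : nat) : (size h <= B)%N ->
  S (h * f) c m = \sum_(i < B) h`_i * S f (c - (i : nat)%:Z) m.
Proof.
move=> H; rewrite {1}(polyB H) mulr_suml Ssum; apply: eq_bigr => i _.
by rewrite -mulrA [_ * f]mulrC SC Sshift.
Qed.

Lemma Smul_dvd (d : int) (h f : {poly int}) (m : nat) :
  (forall c, (d %| S f c m)%Z) -> forall c, (d %| S (h * f) c m)%Z.
Proof.
move=> H c; rewrite (@Smul (size h)) //.
by apply: rpred_sum => i _; apply: dvdz_mull.
Qed.

Lemma sum_blocks (F : nat -> int) q B : (0 < q)%N ->
  (forall k, ~~ (q %| k)%N -> F k = 0) ->
  \sum_(0 <= k < q * B) F k = \sum_(0 <= j < B) F (j * q)%N.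
Proof.
move=> q0 HF; elim: B => [|B IH]; first by rewrite muln0 !big_geq.
rewrite big_nat_recr //= -IH (@big_cat_nat _ _ _ (q * B) 0 (q * B.+1)) //=; last first.
  by rewrite leq_mul2l leqnSn orbT.
rewrite (@big_ltn _ _ _ (q * B) (q * B.+1)); last by rewrite ltn_mul2l q0 ltnSn.
rewrite [X in F _ + X]big1_seq ?addr0 ?[(B * q)%N]mulnC //.
move=> k /andP[_]; rewrite mem_index_iota => /andP[h1 h2]; apply: HF.
apply/negP => /dvdnP [x hx]; subst k.
rewrite [(x * q)%N]mulnC ltn_mul2l q0 /= in h2.
rewrite [(x * q)%N]mulnC ltn_mul2l q0 /= in h1; lia.
Qed.

Lemma Scomp (q : nat) (G : {poly int}) (c : int) (m : nat) : (0 < q)%N ->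
  S (G \Po 'X^q) c (q * m) = if (q%:Z %| c)%Z then S G (c %/ q%:Z)%Z m else 0.
Proof.
move=> q0.
rewrite (@S_big (q * (size G).+1)); last first.
  apply: leq_trans (size_comp_poly_leq _ _) _; rewrite size_polyXn /=.
  rewrite mulnC ltn_mul2l q0 /=; case: (size G) => //= s; lia.
rewrite big_mkcond (@sum_blocks _ q) //=; last first.
  by move=> k hk; rewrite coef_comp_poly_Xn // (negbTE hk) if_same.
have cond j : ((j * q)%N%:Z == c %[mod (q * m)%N%:Z])%Z ->
    (q%:Z %| c)%Z /\ (j%:Z == (c %/ q%:Z)%Z %[mod m%:Z])%Z.
  rewrite eqz_mod_dvd !PoszM => H.
  have hq : (q%:Z %| c)%Z.
    have H1 : (q%:Z %| (j%:Z * q%:Z - c))%Z.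
      by apply: dvdz_trans H; apply: dvdz_mulr; apply: dvdzz.
    have -> : c = j%:Z * q%:Z - (j%:Z * q%:Z - c) by ring.
    by apply: rpredB => //; apply: dvdz_mull; apply: dvdzz.
  split => //; case/dvdzP: hq => c' hc; subst c.
  rewrite mulzK ?eqz_mod_dvd //; last by rewrite eqz_nat -lt0n.
  by rewrite -mulrBl [_ * q%:Z]mulrC dvdz_mul2l ?eqz_nat -?lt0n in H.
case hq: (q%:Z %| c)%Z; last first.
  by rewrite big1 // => j _; case: ifP => // /cond [h _]; rewrite h in hq.
rewrite (@S_big (size G).+1) // [RHS]big_mkcond; apply: eq_bigr => j _.
rewrite coef_comp_poly_Xn // dvdn_mull ?dvdnn // mulnK //.
congr (if _ then _ else _).
case/dvdzP: hq => c' ->.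
rewrite mulzK ?eqz_nat -?lt0n // !eqz_mod_dvd !PoszM -mulrBl [_ * q%:Z]mulrC.
by rewrite dvdz_mul2l ?eqz_nat -?lt0n.
Qed.

Lemma Scomp_dvd (d : int) (q : nat) (G : {poly int}) (m : nat) : (0 < q)%N ->
  (forall c, (d %| S G c m)%Z) -> forall c, (d %| S (G \Po 'X^q) c (q * m))%Z.
Proof. by move=> q0 H c; rewrite Scomp //; case: ifP. Qed.

Lemma Sexact (q : nat) (h G : {poly int}) (r : int) (t m : nat) :
  (size h <= q)%N -> (t < q)%N ->
  S (h * (G \Po 'X^q)) (q%:Z * r + t%:Z) (q * m) = h`_t * S G r m.
Proof.
move=> hs ht; have q0 : (0 < q)%N by apply: leq_ltn_trans ht.
rewrite (@Smul q) // (bigD1 (Ordinal ht)) //= big1 ?addr0; last first.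
  move=> i hi; rewrite Scomp //; case: ifP; last by rewrite mulr0.
  have hne : (nat_of_ord i != t) by move: hi; apply: contra => /eqP e; apply/eqP/val_inj.
  move=> /dvdzP [z hz]; exfalso; move: hne => /eqP; apply.
  have lt1 := ltn_ord i.
  have e : (t%:Z - (nat_of_ord i)%:Z) = (z - r) * q%:Z.
    by rewrite mulrBl -hz; ring.
  have : (z - r = 0).
    move: e; set w := z - r; move: (nat_of_ord i) lt1 => ii lt1 e.
    have ht' : (t%:Z < q%:Z) by rewrite ltz_nat.
    have hi' : (ii%:Z < q%:Z) by rewrite ltz_nat.
    nia.
  move=> w0; rewrite w0 mul0r in e; lia.
rewrite Scomp // addrK dvdz_mulr ?dvdzz // mulKz // eqz_nat -lt0n //.
Qed.

Lemma coef1mX N k : ((1 - 'X : {poly int}) ^+ N)`_k = (-1) ^+ k *+ 'C(N, k).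
Proof.
rewrite exprBn coef_sum.
have E i : ((-1) ^+ i * 1 ^+ (N - i) * 'X ^+ i *+ 'C(N, i) : {poly int})`_k
    = ((-1) ^+ i * (k == i)%:R) *+ 'C(N, i).
  have -> : ((-1 : {poly int}) ^+ i) = ((-1) ^+ i)%:P by rewrite rmorphXn rmorphN1.
  by rewrite coefMn expr1n mulr1 coefCM coefXn.
under eq_bigr do rewrite E.
case: (ltnP k N.+1) => hk.
  rewrite (bigD1 (Ordinal hk)) //= eqxx mulr1 big1 ?addr0 // => i hi.
  by rewrite eq_sym (_ : (_ == _) = false) ?mulr0 ?mul0rn //; apply/negbTE; move: hi; apply: contra => /eqP e; apply/eqP/val_inj.
rewrite bin_small // mulr0n big1 // => i _.
by rewrite (_ : (_ == _) = false) ?mulr0 ?mul0rn //; apply/negbTE; apply/eqP => e; move: (ltn_ord i); rewrite -e ltnNge hk.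
Qed.

Lemma size1mX N : (size ((1 - 'X : {poly int}) ^+ N) <= N.+1)%N.
Proof. by apply/leq_sizeP => j hj; rewrite coef1mX bin_small ?mulr0n. Qed.
Lemma SN (f : {poly int}) (c : int) (m : nat) : S (- f) c m = - S f c m.
Proof.
have := SD f (- f) c m; rewrite subrr S0 => H.
by apply/eqP; rewrite -addr_eq0 addrC -H.
Qed.

Lemma SB (f g : {poly int}) (c : int) (m : nat) : S (f - g) c m = S f c m - S g c m.
Proof. by rewrite SD SN. Qed.

Lemma SCn (n : nat) (f : {poly int}) (c : int) (m : nat) : S (n%:R * f) c m = n%:Z * S f c m.
Proof. by rewrite -polyC_natr SC natz. Qed.

Lemma S1mXp (F : {poly int}) (c : int) (p : nat) : S (F * (1 - 'X^p)) c p = 0.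
Proof.
rewrite mulrBr mulr1 SB Sshift (@Scong _ (c - p%:Z) c) ?subrr //.
by rewrite -[in RHS](subrK p%:Z c) modzDr.
Qed.

Lemma Fleck1_aux (p : nat) a (c : int) : prime p ->
  ((p%:Z) ^+ a %| S ((1 - 'X) ^+ (a * (p - 1) + 1)) c p)%Z.
Proof.
move=> pp; have p1 := prime_gt1 pp.
elim: a c => [|a IH] c; first by rewrite expr0 dvd1z.
have [k Hk] := L2X pp.
have -> : ((1 - 'X : {poly int}) ^+ (a.+1 * (p - 1) + 1))
   = (1 - 'X) ^+ (a * (p - 1)) * (1 - 'X ^+ p)
     + p%:R * ((1 - 'X) ^+ (a * (p - 1) + 1) * k).
  have -> : (a.+1 * (p - 1) + 1 = a * (p - 1) + p)%N by rewrite mulSn; lia.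
  rewrite exprD Hk exprD expr1.
  set A := (1 - 'X : {poly int}) ^+ (a * (p - 1)). set Y := (1 - 'X : {poly int}). set Z := 'X^p.
  rewrite mulrDr; congr (_ + _); rewrite mulrCA; congr (_ * _); by rewrite mulrA.
rewrite SD S1mXp add0r SCn exprSr [_ * p%:Z]mulrC.
apply: (@dvdz_mul p%:Z (p%:Z ^+ a)); first by apply: dvdzz.
rewrite mulrC; apply: Smul_dvd => c'; exact: IH.
Qed.

Lemma Fleck1 (p a N : nat) (c : int) : prime p -> (a * (p - 1) + 1 <= N)%N ->
  ((p%:Z) ^+ a %| S ((1 - 'X) ^+ N) c p)%Z.
Proof.
move=> pp hN; rewrite -(subnK hN) exprD.
by apply: Smul_dvd => c'; apply: Fleck1_aux.
Qed.
Lemma compXq (q k : nat) : (1 - 'X ^+ q : {poly int}) ^+ k = ((1 - 'X) ^+ k) \Po 'X^q.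
Proof.
elim: k => [|k IH]; first by rewrite !expr0 comp_polyC.
by rewrite !exprS comp_polyM IH comp_polyB comp_polyC comp_polyX.
Qed.

Lemma term_eq (q k j C p : nat) (A g : {poly int}) :
  A * ((1 - 'X ^+ q) ^+ k * (p%:R * g) ^+ j *+ C)
  = (p%:Z ^+ j * C%:Z)%:P * ((A * g ^+ j) * (((1 - 'X) ^+ k) \Po 'X^q)).
Proof.
rewrite -compXq rmorphM rmorphXn -!natz !rmorph_nat -mulr_natr exprMn; ring.
Qed.

Lemma Fleck2 (p a N : nat) (c : int) : prime p -> (a * (p * (p - 1)) + p <= N)%N ->
  ((p%:Z) ^+ a %| S ((1 - 'X) ^+ N) c (p * p))%Z.
Proof.
move=> pp hN; have p1 := prime_gt1 pp; have p0 := prime_gt0 pp.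
have [h Hh] := L2 ('X : {poly int}) pp.
set M := (N %/ p)%N; set s0 := (N %% p)%N.
have hs0 : (s0 < p)%N by rewrite ltn_mod.
have hM : (a * (p - 1) + 1 <= M)%N.
  have := divn_eq N p; rewrite -/M -/s0 => eN.
  rewrite eN in hN.
  have : (p * (a * (p - 1) + 1) < p * M.+1)%N.
    rewrite mulnDr muln1 mulnA [(p * a)%N]mulnC -mulnA mulnS.
    by apply: leq_ltn_trans hN _; rewrite mulnC addnC ltn_add2r.
  by rewrite ltn_mul2l p0.
rewrite (divn_eq N p) -/M -/s0 exprD mulnC exprM Hh exprDn mulr_suml Ssum.
apply: rpred_sum => j _.
rewrite mulrC term_eq SC.
case: (leqP a j) => haj.
  apply: dvdz_mulr; apply: dvdz_mulr; exact: dvdz_exp2l.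
have -> : (p%:Z ^+ a = p%:Z ^+ j * p%:Z ^+ (a - j)) by rewrite -exprD subnKC // ltnW.
rewrite -mulrA; apply: dvdz_mul; first exact: dvdzz.
apply: dvdz_mull; apply: Smul_dvd; apply: Scomp_dvd => // c'.
apply: Fleck1 => //.
have hj := ltn_ord j.
nia.
Qed.

Lemma core (p b n e s t : nat) (r : int) : prime p ->
  (s < p ^ b)%N -> (t < p ^ b)%N -> (e * (p * (p - 1)) + p <= n)%N ->
  (p%:Z ^+ e.+1 %| S ((1 - 'X) ^+ (p ^ b * n + s)) ((p ^ b)%:Z * r + t%:Z) (p ^ b * (p * p))
     - ((-1) ^+ t *+ 'C(s, t)) * S ((1 - 'X) ^+ n) r (p * p))%Z.
Proof.
move=> pp hs ht hn; have p1 := prime_gt1 pp; have p0 := prime_gt0 pp.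

have [g Hg] := Frob b pp.
rewrite exprD exprM Hg exprDn mulr_suml big_ord_recl /= SD.
rewrite subn0 expr0 mulr1 bin0 mulr1n mulrC compXq Sexact ?coef1mX //; last first.
  by apply: leq_trans (size1mX s) _.
rewrite [X in X - _]addrC addrK Ssum.
apply: rpred_sum => i _.
rewrite mulrC term_eq SC.
set j := bump 0 i.
have j1 : (1 <= j)%N by rewrite /j /bump /= add1n.
have jn : (j <= n)%N by rewrite /j /bump /= add1n ltn_ord.
case: (leqP e.+1 j) => hej.
  apply: dvdz_mulr; apply: dvdz_mulr; exact: dvdz_exp2l.
have key : exists a, (a * (p * (p - 1)) + p <= n - j)%N /\
    (p%:Z ^+ e.+1 %| p%:Z ^+ j * ('C(n, j))%:Z * p%:Z ^+ a)%Z.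
  case: (ltnP 1 j) => hj2.
    exists (e.+1 - j)%N; split.
      move: hn; set F := (p * (p - 1))%N => hn.
      have F2 : (2 <= F)%N by rewrite /F (@leq_mul 2 1) // subn_gt0.
      have eE : e = ((e.+1 - j) + (j - 1))%N by lia.
      have Y : (2 * (j - 1) <= (j - 1) * F)%N by rewrite mulnC leq_mul2l F2 orbT.
      rewrite eE mulnDl in hn; lia.
    by rewrite mulrAC -exprD (subnKC (ltnW hej)); apply: dvdz_mulr; apply: dvdzz.
  have j1' : j = 1%N by lia.
  rewrite j1'.
  case: (leqP (e * (p * (p - 1)) + p) (n - 1)) => hn1.
    exists e; split => //.
    by rewrite mulrAC -exprD add1n; apply: dvdz_mulr; apply: dvdzz.
  have hn' : n = (p * (e * (p - 1) + 1))%N.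
    rewrite mulnDr muln1 mulnA [(p * e)%N]mulnC -mulnA; lia.
  exists (e - 1)%N; split.
    move: hn hn1; set F := (p * (p - 1))%N => hn hn1.
    have F1 : (1 <= F)%N by rewrite /F (@leq_mul 1 1) // ?subn_gt0 // ltnW.
    have eE : e = ((e - 1) + 1)%N by lia.
    rewrite eE mulnDl mul1n in hn hn1; lia.
  rewrite bin1 hn' PoszM.
  have -> : p%:Z ^+ 1 * (p%:Z * (e * (p - 1) + 1)%N%:Z) * p%:Z ^+ (e - 1)
      = p%:Z ^+ (1 + 1 + (e - 1)) * (e * (p - 1) + 1)%N%:Z by rewrite !exprD expr1; ring.
  have -> : (1 + 1 + (e - 1) = e.+1)%N by lia.
  by apply: dvdz_mulr; apply: dvdzz.
case: key => a [ha hd].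
apply: (dvdz_trans hd); apply: dvdz_mul; first exact: dvdzz.
by apply: Smul_dvd; apply: Scomp_dvd; rewrite ?expn_gt0 ?p0 // => c'; apply: Fleck2.
Qed.
Lemma altsumE N c m : altsum N c m = (S ((1 - 'X) ^+ N) c m)%:~R.
Proof.
rewrite /altsum (@S_big N.+1) ?size1mX // rmorph_sum; apply: eq_bigr => k _.
by rewrite coef1mX rmorphMn rmorphXn rmorphN1 mulr_natl.
Qed.

Lemma ordp_int (p : nat) (z : int) : prime p -> z != 0 -> (1 <= ordp p (p%:Z * z)%:~R)%R.
Proof.
move=> pp z0; rewrite /ordp numq_int denq_int /= logn1 subr0 abszM /=.
rewrite lognM ?absz_gt0 ?z0 ?prime_gt0 // logn_prime // eqxx.
by rewrite lez_nat.
Qed.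

Lemma expE (p b n s : nat) : prime p -> (s < p ^ b)%N ->
  (((p ^ b * n + s)%N%:Z - (p ^ b.+1)%N%:Z) %/ (totient (p ^ b.+2))%:Z)%Z
  = ((n%:Z - p%:Z) %/ (totient (p ^ 2))%:Z)%Z.
Proof.
move=> pp hs; have p1 := prime_gt1 pp; have p0 := prime_gt0 pp.
rewrite !totient_pfactor //=.
set F := (p.-1 * p)%N.
have F0 : (0 < F)%N by rewrite /F muln_gt0 p0 andbT -subn1 subn_gt0.
set q := (p ^ b)%N.
have q0 : (0 < q)%N by rewrite expn_gt0 p0.
have -> : (p.-1 * p ^ b.+1 = q * F)%N by rewrite /F /q expnSr mulnCA mulnA.
have -> : (p ^ b.+1 = q * p)%N by rewrite expnSr.
set e := ((n%:Z - p%:Z) %/ F%:Z)%Z.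
have hd := divz_eq (n%:Z - p%:Z) F%:Z.
set rho := ((n%:Z - p%:Z) %% F%:Z)%Z in hd.
have r0 : 0 <= rho by apply: modz_ge0; rewrite eqz_nat -lt0n.
have r1 : rho < F%:Z by apply: ltz_pmod; rewrite ltz_nat.
have -> : ((q * n + s)%N%:Z - (q * p)%N%:Z) = e * (q * F)%N%:Z + (q%:Z * rho + s%:Z).
  rewrite !PoszM PoszD.
  have -> : q%:Z * n%:Z + s%:Z - q%:Z * p%:Z = q%:Z * (n%:Z - p%:Z) + s%:Z by ring.
  rewrite hd -/e /F !PoszM; ring.
rewrite divzMDl; last by rewrite eqz_nat muln_eq0 negb_or -!lt0n q0 F0.
rewrite divz_small ?addr0 //.
apply/andP; split.
  by apply: addr_ge0 => //; apply: mulr_ge0.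
rewrite gtz0_abs ?ltz_nat ?muln_gt0 ?q0 //.
have : q%:Z * rho + s%:Z < q%:Z * rho + q%:Z by rewrite ltrD2l ltz_nat.
move/lt_le_trans; apply.
rewrite PoszM -[X in _ + X]mulr1 -mulrDr ler_pM2l ?ltz_nat //.
  by rewrite lezD1.
by rewrite -subn1 subn_gt0 p1 p0.
Qed.

Unset Implicit Arguments.
Theorem theorem1p7 (p alpha n : nat) (r : int) (s t : nat) :
  prime p -> (2 <= alpha)%N ->
  (s < p ^ (alpha - 2))%N -> (t < p ^ (alpha - 2))%N ->
  rat_congr p
    ((p%:Q) ^ (- (((p ^ (alpha - 2) * n + s)%N%:Z - (p ^ (alpha - 1))%N%:Z)
                    %/ (totient (p ^ alpha))%:Z)%Z)
     * altsum (p ^ (alpha - 2) * n + s)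
              ((p ^ (alpha - 2))%N%:Z * r + t%:Z) (p ^ alpha))
    ((-1) ^+ t * ('C(s, t))%:R *
     ((p%:Q) ^ (- ((n%:Z - p%:Z) %/ (totient (p ^ 2))%:Z)%Z)
      * altsum n r (p ^ 2))).
Proof.
move=> pp; case: alpha => [|[|b]] // _.
rewrite (_ : (b.+2 - 2 = b)%N); last by lia.
rewrite (_ : (b.+2 - 1 = b.+1)%N); last by lia.
move=> hs ht.
have p1 := prime_gt1 pp; have p0 := prime_gt0 pp.
rewrite expE // !altsumE.
rewrite (_ : (p ^ b.+2 = p ^ b * (p * p))%N); last by rewrite -addn2 expnD mulnn.
rewrite (_ : (p ^ 2 = p * p)%N); last by rewrite mulnn.
set e := ((n%:Z - p%:Z) %/ (totient (p * p))%:Z)%Z.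
have hd := divz_eq (n%:Z - p%:Z) (totient (p * p))%:Z.
rewrite -/e in hd.
have hT : (0 < totient (p * p))%N by rewrite totient_gt0 muln_gt0 p0.
have r0 : 0 <= ((n%:Z - p%:Z) %% (totient (p * p))%:Z)%Z.
  by apply: modz_ge0; rewrite eqz_nat -lt0n.
set A1 := S _ _ (p ^ b * (p * p)).
set A2 := S _ r (p * p).
set K : int := (-1) ^+ t *+ 'C(s, t).
have hK : ((-1) ^+ t * ('C(s, t))%:R : rat) = K%:~R.
  by rewrite /K rmorphMn rmorphXn rmorphN1 mulr_natr.
have core' : forall en : nat, e = en%:Z -> (p%:Z ^+ en.+1 %| A1 - K * A2)%Z.
  move=> en he; apply: core => //.
  rewrite he in hd.
  set T := totient (p * p) in hd r0.
  have hT2 : T = (p * (p - 1))%N by rewrite /T mulnn totient_pfactor //= mulnC subn1.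
  rewrite -hT2 -lez_nat PoszD PoszM.
  move: hd r0; set rho := ((n%:Z - p%:Z) %% T%:Z)%Z; set Y := en%:Z * T%:Z.
  lia.
have [z hz] : exists z : int, (p%:Q) ^ (- e) * (A1 - K * A2)%:~R = (p%:Z * z)%:~R.
  case E: e => [en|en].
    case/dvdzP: (core' en E) => w ->; exists w.
    rewrite -invr_expz -exprnP !rmorphM !rmorphXn exprSr.
    have P0 : (p%:Z%:~R : rat) != 0 by rewrite intr_eq0 eqz_nat -lt0n.
    by field; rewrite expf_neq0.
  exists (p%:Z ^+ en * (A1 - K * A2)).
  by rewrite NegzE opprK -exprnP !rmorphM !rmorphXn exprS mulrA.
rewrite /rat_congr hK.
have -> : p%:Q ^ (- e) * A1%:~R - K%:~R * (p%:Q ^ (- e) * A2%:~R)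
    = p%:Q ^ (- e) * (A1 - K * A2)%:~R.
  by rewrite rmorphB rmorphM /=; ring.
rewrite hz; have [->|z0] := eqVneq z 0; first by left; rewrite mulr0.
by right; apply: ordp_int.
Qed.
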